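(* Let $a<b$ be real numbers and let $g:[a,b)\to\mathbb{R}$ be a continuous function that is differentiable on $(a,b)$ and has a (finite) right-hand derivative at the point $a$. For every $x\in(a,b)$ let $\xi(x)$ be the supremum of the numbers $\tau\in(a,x]$ such that $g'(\tau)\cdot(x-a)=g(x)-g(a)$. Then $$\varlimsup_{x\to a}\frac{\xi(x)-a}{x-a}\ \geq\ \frac1e.$$
   Context: Limits at $a$ are right-hand limits. *)

(* Defs.v *)
From Stdlib Require Import Reals.
From Coquelicot Require Import Coquelicot.
Open Scope R_scope.

(* xi g a x = sup { tau in (a,x] | g'(tau) * (x - a) = g x - g a }.
   For a < x < b the set is nonempty (mean value theorem) and bounded by x,
   so the supremum is a finite real; [real] extracts it from [Rbar]. *)
Definition xi (g : R -> R) (a x : R) : R :=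
  real (Lub_Rbar (fun tau => a < tau <= x /\ Derive g tau * (x - a) = g x - g a)).

Definition limsup_right_ge (f : R -> R) (a b c : R) : Prop :=
  forall eps delta : R, 0 < eps -> 0 < delta ->
    exists x : R, a < x < b /\ x < a + delta /\ c - eps < f x.

(* Main.v *)
Require Import Defs.
From Stdlib Require Import Reals.
From Coquelicot Require Import Coquelicot.
From Stdlib Require Import Lra Classical.
Open Scope R_scope.

Lemma darboux_up (f df : R -> R) (p q m : R) : p < q ->
  (forall y, p <= y <= q -> derivable_pt_lim f y (df y)) ->
  df p < m -> m < df q -> exists r, p < r < q /\ df r = m.
Proof.
  intros Hpq Hd Hp Hq.
  set (F := fun y => f y - m * y).
  assert (HF : forall y, p <= y <= q -> derivable_pt_lim F y (df y - m)).
  { intros y Hy. unfold F.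
    replace (df y - m) with (df y - m * 1) by ring.
    apply derivable_pt_lim_minus; [now apply Hd|].
    apply derivable_pt_lim_scal. apply derivable_pt_lim_id. }
  destruct (continuity_ab_min F p q) as [mx [Hmin Hmx]]; [lra| |].
  { intros y Hy. apply derivable_continuous_pt. exists (df y - m). now apply HF. }
  assert (Hp' : mx <> p).
  { intros ->. destruct (HF p ltac:(lra) (m - df p) ltac:(lra)) as [d Hd'].
    set (h := Rmin (d/2) (q - p)).
    assert (h0 : 0 < h) by (unfold h; apply Rmin_glb_lt; destruct d; simpl; lra).
    assert (h1 : h <= q - p) by apply Rmin_r.
    assert (h2 : h <= d/2) by apply Rmin_l.
    specialize (Hd' h ltac:(lra)).
    assert (Rabs h < d) by (rewrite Rabs_pos_eq; destruct d; simpl in *; lra).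
    specialize (Hd' H). apply Rabs_def2 in Hd'.
    assert ((F (p + h) - F p) / h < 0) by lra.
    assert (F (p+h) - F p < 0).
    { apply (Rmult_lt_compat_r h) in H0; [|lra].
      unfold Rdiv in H0. rewrite Rmult_assoc, Rinv_l in H0; lra. }
    specialize (Hmin (p+h) ltac:(lra)). lra. }
  assert (Hq' : mx <> q).
  { intros ->. destruct (HF q ltac:(lra) (df q - m) ltac:(lra)) as [d Hd'].
    set (h := Rmin (d/2) (q - p)).
    assert (h0 : 0 < h) by (unfold h; apply Rmin_glb_lt; destruct d; simpl; lra).
    assert (h1 : h <= q - p) by apply Rmin_r.
    assert (h2 : h <= d/2) by apply Rmin_l.
    specialize (Hd' (-h) ltac:(lra)).
    assert (Rabs (-h) < d) by (rewrite Rabs_Ropp, Rabs_pos_eq; destruct d; simpl in *; lra).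
    specialize (Hd' H). apply Rabs_def2 in Hd'.
    assert ((F (q + - h) - F q) / - h > 0) by lra.
    assert (F (q + - h) - F q < 0).
    { apply (Rmult_lt_compat_r h) in H0; [|lra].
      unfold Rdiv in H0. rewrite Rmult_0_l, Rmult_assoc in H0.
      replace (/ - h * h) with (-1) in H0 by (field; lra). lra. }
    specialize (Hmin (q + - h) ltac:(lra)). lra. }
  exists mx. split; [lra|].
  assert (pr : derivable_pt F mx) by (exists (df mx - m); apply HF; lra).
  pose proof (deriv_minimum F p q mx (exist _ (df mx - m) (HF mx ltac:(lra))) ltac:(lra) ltac:(lra)
     (fun x _ _ => Hmin x ltac:(lra))) as E.
  simpl in E. lra.
Qed.

Lemma darboux_down (f df : R -> R) (p q m : R) : p < q ->
  (forall y, p <= y <= q -> derivable_pt_lim f y (df y)) ->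
  m < df p -> df q < m -> exists r, p < r < q /\ df r = m.
Proof.
  intros Hpq Hd Hp Hq.
  destruct (darboux_up (fun y => - f y) (fun y => - df y) p q (-m)) as [r [Hr Er]];
    try lra.
  - intros y Hy. apply derivable_pt_lim_opp. now apply Hd.
  - exists r. split; auto; lra.
Qed.

Lemma sign_const (f df : R -> R) (p q m : R) : p <= q ->
  (forall y, p <= y <= q -> derivable_pt_lim f y (df y)) ->
  (forall y, p <= y <= q -> df y <> m) ->
  m < df q -> m < df p.
Proof.
  intros Hpq Hd Hne Hq. destruct (Req_dec p q) as [->|Hn]; auto.
  destruct (Rtotal_order (df p) m) as [Hl|[He|Hg]]; auto.
  - destruct (darboux_up f df p q m) as [r [Hr Er]]; try lra; auto.
    exfalso; apply (Hne r); lra.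
  - exfalso; apply (Hne p); lra.
Qed.

Lemma sign_const' (f df : R -> R) (p q m : R) : p <= q ->
  (forall y, p <= y <= q -> derivable_pt_lim f y (df y)) ->
  (forall y, p <= y <= q -> df y <> m) ->
  df q < m -> df p < m.
Proof.
  intros Hpq Hd Hne Hq. destruct (Req_dec p q) as [->|Hn]; auto.
  destruct (Rtotal_order (df p) m) as [Hl|[He|Hg]]; auto.
  - exfalso; apply (Hne p); lra.
  - destruct (darboux_down f df p q m) as [r [Hr Er]]; try lra; auto.
    exfalso; apply (Hne r); lra.
Qed.

Lemma lub_ge (P : R -> Prop) (x t : R) :
  (forall s, P s -> s <= x) -> P t -> t <= real (Lub_Rbar P).
Proof.
  intros Hub Ht. destruct (Lub_Rbar_correct P) as [H1 H2].
  assert (A := H1 t Ht).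
  assert (B : Rbar_le (Lub_Rbar P) x) by (apply H2; intros s Hs; apply Hub; auto).
  destruct (Lub_Rbar P); simpl in *; tauto.
Qed.

Lemma incr_weak (f df : R -> R) (p q : R) : p <= q ->
  (forall y, p <= y <= q -> derivable_pt_lim f y (df y)) ->
  (forall y, p <= y <= q -> 0 <= df y) -> f p <= f q.
Proof.
  intros Hpq Hd Hpos. destruct (Req_dec p q) as [->|Hn]; [lra|].
  destruct (MVT_cor2 f df p q ltac:(lra) Hd) as [c [E Hc]].
  assert (0 <= df c * (q - p)) by (apply Rmult_le_pos; [apply Hpos|]; lra). lra.
Qed.

Lemma incr_strict (f df : R -> R) (p q : R) : p < q ->
  (forall y, p <= y <= q -> derivable_pt_lim f y (df y)) ->
  (forall y, p <= y <= q -> 0 < df y) -> f p < f q.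
Proof.
  intros Hpq Hd Hpos.
  destruct (MVT_cor2 f df p q ltac:(lra) Hd) as [c [E Hc]].
  assert (0 < df c * (q - p)) by (apply Rmult_lt_0_compat; [apply Hpos|]; lra). lra.
Qed.

Definition phi (g : R -> R) a y := (g y - g a) / (y - a).
Definition qf g a l u := (phi g a u - l)/(u - a).
Definition Pf g a l d y := RInt (qf g a l) (a + d/2) y.
Definition Gf g a l d k t := (phi g a t - l) - (Pf g a l d (a + k*(t-a)) - Pf g a l d t).

Lemma phi_der g a y : a < y -> ex_derive g y ->
  is_derive (phi g a) y ((Derive g y - phi g a y)/(y - a)).
Proof. intros Hy He. unfold phi. auto_derive.
  - repeat split; auto. lra.
  - change (Derive (fun x => g x) y) with (Derive g y). field. lra.
Qed.

Lemma main (a d l c : R) (g : R -> R) : 0 < d -> 0 < c -> c < / exp 1 ->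
 (forall y, a < y < a + d -> ex_derive g y) ->
 (forall e, 0 < e -> exists eta, 0 < eta /\
     forall y, a < y < a + eta -> Rabs (phi g a y - l) < e) ->
 (forall x t, a < x < a + d -> a < t <= x -> a + c*(x-a) < t -> phi g a x < Derive g t) ->
 False.
Proof.
  intros Hd Hc Hce Hder Hlim Pos.
  assert (Hc1 : c < 1).
  { assert (1 < exp 1) by (pose proof (exp_increasing 0 1 ltac:(lra)) as E; rewrite exp_0 in E; exact E).
    assert (/ exp 1 < / 1) by (apply Rinv_lt_contravar; lra). rewrite Rinv_1 in H0. lra. }
  set (dphi := fun y => (Derive g y - phi g a y)/(y - a)).
  assert (Hphid : forall y, a < y < a + d -> is_derive (phi g a) y (dphi y)).
  { intros y Hy. apply phi_der; [lra|]. apply Hder; lra. }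
  assert (Hphid' : forall y, a < y < a + d -> derivable_pt_lim (phi g a) y (dphi y)).
  { intros y Hy. apply is_derive_Reals. now apply Hphid. }
  assert (Hdpos : forall y, a < y < a + d -> 0 < dphi y).
  { intros y Hy. unfold dphi. apply Rdiv_lt_0_compat; [|lra].
    assert (phi g a y < Derive g y); [|lra]. apply Pos; try lra.
    assert (c * (y - a) < 1 * (y - a)) by (apply Rmult_lt_compat_r; lra). lra. }
  assert (Hinc : forall y1 y2, a < y1 -> y1 < y2 -> y2 < a + d -> phi g a y1 < phi g a y2).
  { intros y1 y2 H1 H2 H3. apply (incr_strict _ dphi); auto.
    - intros y Hy; apply Hphid'; lra.
    - intros y Hy; apply Hdpos; lra. }
  assert (Hge : forall y, a < y < a + d -> l <= phi g a y).
  { intros y Hy. destruct (Rle_or_lt l (phi g a y)) as [H|H]; auto.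
    destruct (Hlim (l - phi g a y) ltac:(lra)) as [eta [Heta Hy']].
    set (s := a + Rmin eta (y - a) / 2).
    assert (Hm1 : Rmin eta (y - a) <= eta) by apply Rmin_l.
    assert (Hm2 : Rmin eta (y - a) <= y - a) by apply Rmin_r.
    assert (Hm3 : 0 < Rmin eta (y - a)) by (apply Rmin_glb_lt; lra).
    specialize (Hy' s ltac:(unfold s; lra)). apply Rabs_def2 in Hy'.
    assert (phi g a s < phi g a y) by (apply Hinc; unfold s; lra). lra. }
  assert (Hposi : forall y, a < y < a + d -> l < phi g a y).
  { intros y Hy. apply Rle_lt_trans with (phi g a ((a + y)/2)).
    - apply Hge; lra.
    - apply Hinc; lra. }
  set (k := / c).
  assert (Hck : c * k = 1) by (unfold k; field; lra).
  assert (Hk1 : 1 < k).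
  { assert (/ 1 < k) by (unfold k; apply Rinv_lt_contravar; lra). rewrite Rinv_1 in H; lra. }
  assert (Hlnk : 1 < ln k).
  { unfold k. rewrite ln_Rinv; [|lra].
    assert (ln c < ln (/ exp 1)) by (apply ln_increasing; lra).
    rewrite ln_Rinv, ln_exp in H; [lra|]. apply exp_pos. }
  assert (HD : forall t, a < t -> a + k * (t - a) < a + d -> phi g a (a + k*(t-a)) <= Derive g t).
  { intros t Ht HT. set (T := a + k * (t - a)) in *.
    assert (HtT : t < T).
    { unfold T. assert (1 * (t - a) < k * (t - a)) by (apply Rmult_lt_compat_r; lra). lra. }
    destruct (Rle_or_lt (phi g a T) (Derive g t)) as [H|H]; auto. exfalso.
    assert (Hcont : continuity_pt (phi g a) T).
    { apply derivable_continuous_pt. exists (dphi T). apply Hphid'. lra. }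
    destruct (proj1 (continuity_pt_locally _ _) Hcont (mkposreal _ (Rlt_Rminus _ _ H))) as [del Hdel].
    set (x := T - Rmin del (T - t) / 2).
    assert (Hm1 : Rmin del (T - t) <= del) by apply Rmin_l.
    assert (Hm2 : Rmin del (T - t) <= T - t) by apply Rmin_r.
    assert (Hm3 : 0 < Rmin del (T - t)) by (apply Rmin_glb_lt; [apply cond_pos|lra]).
    assert (Hx : Rabs (x - T) < del).
    { rewrite Rabs_left; unfold x; lra. }
    specialize (Hdel x Hx). simpl in Hdel. apply Rabs_def2 in Hdel.
    assert (phi g a x < Derive g t); [|lra].
    apply Pos; try (unfold x; lra).
    assert (c * (x - a) < c * (T - a)) by (apply Rmult_lt_compat_l; unfold x; lra).
    unfold T in H0. replace (c * (a + k * (t - a) - a)) with (c * k * (t - a)) in H0 by ring.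
    rewrite Hck in H0. lra. }

  set (q := qf g a l).
  assert (Hqd : forall u, a < u < a + d -> ex_derive q u).
  { intros u Hu. unfold q, qf. auto_derive. repeat split; [|lra].
    exists (dphi u); apply Hphid; lra. }
  assert (Hqc : forall u, a < u < a + d -> continuous q u)
    by (intros u Hu; apply (@ex_derive_continuous R_AbsRing R_NormedModule q u); auto).
  assert (HP : forall y, a < y < a + d -> is_derive (Pf g a l d) y (q y)).
  { intros y Hy. apply (is_derive_RInt q (Pf g a l d) (a + d/2) y).
    - assert (He : 0 < Rmin (y - a) (a + d - y)) by (apply Rmin_glb_lt; lra).
      exists (mkposreal _ He). intros u Hu.
      assert (Hu' : Rabs (u - y) < Rmin (y - a) (a + d - y)) by exact Hu.
      assert (Hm1 : Rmin (y - a) (a + d - y) <= y - a) by apply Rmin_l.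
      assert (Hm2 : Rmin (y - a) (a + d - y) <= a + d - y) by apply Rmin_r.
      apply Rabs_def2 in Hu'.
      unfold Pf. apply (@RInt_correct R_CompleteNormedModule). apply (@ex_RInt_continuous R_CompleteNormedModule). intros z Hz. apply Hqc.
      unfold Rmin, Rmax in Hz. destruct (Rle_dec _ _) in Hz; lra.
    - apply Hqc; lra. }
  assert (Hbnd : forall t, a < t -> a + k*(t-a) < a + d ->
     (phi g a t - l) * ln k <= Pf g a l d (a + k*(t-a)) - Pf g a l d t
     <= (phi g a (a+k*(t-a)) - l) * ln k).
  { intros t Ht HT. set (T := a + k * (t - a)) in *.
    assert (HtT : t < T).
    { unfold T. assert (1 * (t - a) < k * (t - a)) by (apply Rmult_lt_compat_r; lra). lra. }
    assert (HlnT : ln (T - a) = ln k + ln (t - a)).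
    { unfold T. replace (a + k*(t-a) - a) with (k*(t-a)) by ring. apply ln_mult; lra. }
    split.
    - set (C := phi g a t - l).
      set (H1 := fun y => Pf g a l d y - C * ln (y - a)).
      assert (H1 t <= H1 T).
      { apply (incr_weak H1 (fun y => q y - C / (y - a))); [lra| |].
        + intros y Hy. apply is_derive_Reals. unfold H1.
          apply (is_derive_minus (Pf g a l d) (fun y => C * ln (y - a))).
          * apply HP; lra.
          * auto_derive; [lra| field; lra].
        + intros y Hy. unfold q, qf, C.
          assert (phi g a t <= phi g a y).
          { destruct (Req_dec t y) as [->|Hn]; [lra|]. left; apply Hinc; lra. }
          replace ((phi g a y - l) / (y - a) - (phi g a t - l) / (y - a))
            with ((phi g a y - phi g a t) * / (y - a)) by (field; lra).
          apply Rmult_le_pos; [lra|]. left; apply Rinv_0_lt_compat; lra. }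
      unfold H1 in H. rewrite HlnT in H. lra.
    - set (C := phi g a T - l).
      set (H1 := fun y => Pf g a l d y - C * ln (y - a)).
      assert (H1 T <= H1 t).
      { cut (- H1 t <= - H1 T); [lra|].
        apply (incr_weak (fun y => - H1 y) (fun y => - (q y - C / (y - a))) t T); [lra| |].
        + intros y Hy. apply derivable_pt_lim_opp. apply is_derive_Reals. unfold H1.
          apply (is_derive_minus (Pf g a l d) (fun y => C * ln (y - a))).
          * apply HP; lra.
          * auto_derive; [lra| field; lra].
        + intros y Hy. unfold q, qf, C.
          assert (phi g a y <= phi g a T).
          { destruct (Req_dec y T) as [->|Hn]; [lra|]. left; apply Hinc; lra. }
          replace (- ((phi g a y - l) / (y - a) - (phi g a T - l) / (y - a)))
            with ((phi g a T - phi g a y) * / (y - a)) by (field; lra).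
          apply Rmult_le_pos; [lra|]. left; apply Rinv_0_lt_compat; lra. }
      unfold H1 in H. rewrite HlnT in H. lra. }
  set (dG := fun t => dphi t - k * q (a + k*(t-a)) + q t).
  assert (HG : forall t, a < t -> a + k*(t-a) < a + d ->
     derivable_pt_lim (Gf g a l d k) t (dG t) /\ 0 <= dG t).
  { intros t Ht HT.
    assert (HtT : t < a + k * (t - a)).
    { assert (1 * (t - a) < k * (t - a)) by (apply Rmult_lt_compat_r; lra). lra. }
    split.
    - apply is_derive_Reals. unfold Gf. auto_derive.
      + repeat split.
        * exists (dphi t); apply Hphid; lra.
        * exists (q (a + k * (t + - a))); apply HP; lra.
        * exists (q t); apply HP; lra.
      + replace (a + k * (t + - a)) with (a + k * (t - a)) by ring.
        assert (E1 : Derive (fun x => phi g a x) t = dphi t)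
          by (apply is_derive_unique; apply Hphid; lra).
        assert (E2 : Derive (fun x => Pf g a l d x) (a + k * (t - a)) = q (a + k * (t - a)))
          by (apply is_derive_unique; apply HP; lra).
        assert (E3 : Derive (fun x => Pf g a l d x) t = q t)
          by (apply is_derive_unique; apply HP; lra).
        rewrite E1, E2, E3. unfold dG. ring.
    - assert (E : dG t = (Derive g t - phi g a (a + k*(t-a))) / (t - a)).
      { assert (k * (t - a) <> 0) by (apply Rmult_integral_contrapositive; split; lra).
        unfold dG, dphi, q, qf. replace (a + k * (t - a) - a) with (k * (t - a)) by ring.
        field. repeat split; lra. }
      rewrite E. apply Rmult_le_pos.
      + specialize (HD t Ht HT). lra.
      + left; apply Rinv_0_lt_compat; lra. }
  set (t0 := a + d / (2 * k)).
  assert (Ht0a : t0 - a = d / (2 * k)) by (unfold t0; ring).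
  assert (Hkt0 : k * (t0 - a) = d / 2) by (rewrite Ht0a; field; lra).
  assert (Ht0 : a < t0).
  { assert (0 < d / (2 * k)) by (apply Rdiv_lt_0_compat; lra). lra. }
  assert (HT0 : a + k * (t0 - a) < a + d) by lra.
  assert (Ht0d : t0 - a < d / 2).
  { assert (1 * (t0 - a) < k * (t0 - a)) by (apply Rmult_lt_compat_r; lra). lra. }
  assert (HGt0 : Gf g a l d k t0 < 0).
  { unfold Gf. destruct (Hbnd t0 Ht0 HT0) as [B1 _].
    assert (P0 : l < phi g a t0) by (apply Hposi; lra).
    assert (0 < (phi g a t0 - l) * (ln k - 1)) by (apply Rmult_lt_0_compat; lra).
    nra. }
  set (e := - Gf g a l d k t0 / ln k).
  assert (He : 0 < e) by (unfold e; apply Rdiv_lt_0_compat; lra).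
  destruct (Hlim e He) as [eta [Heta Hyl]].
  set (m := Rmin eta (d/2)).
  assert (Hm1 : m <= eta) by apply Rmin_l.
  assert (Hm2 : m <= d/2) by apply Rmin_r.
  assert (Hm3 : 0 < m) by (apply Rmin_glb_lt; lra).
  set (s := a + m / (2 * k)).
  assert (Hsa : s - a = m / (2 * k)) by (unfold s; ring).
  assert (Hks : k * (s - a) = m / 2) by (rewrite Hsa; field; lra).
  assert (Hs : a < s).
  { assert (0 < m / (2 * k)) by (apply Rdiv_lt_0_compat; lra). lra. }
  assert (Hst : s < t0).
  { assert (k * (s - a) < k * (t0 - a)) by lra.
    apply Rmult_lt_reg_l in H; lra. }
  assert (HGs : Gf g a l d k s <= Gf g a l d k t0).
  { apply (incr_weak _ dG); [lra| |].
    - intros y Hy. apply HG; [lra|].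
      assert (k * (y - a) <= k * (t0 - a)) by (apply Rmult_le_compat_l; lra). lra.
    - intros y Hy. apply HG; [lra|].
      assert (k * (y - a) <= k * (t0 - a)) by (apply Rmult_le_compat_l; lra). lra. }
  assert (HGs2 : - (phi g a (a + k*(s-a)) - l) * ln k <= Gf g a l d k s).
  { unfold Gf. destruct (Hbnd s Hs ltac:(lra)) as [_ B2].
    assert (l <= phi g a s) by (apply Hge; lra). lra. }
  specialize (Hyl (a + k * (s - a)) ltac:(lra)). apply Rabs_def2 in Hyl.
  assert ((phi g a (a + k * (s - a)) - l) * ln k < e * ln k)
    by (apply Rmult_lt_compat_r; lra).
  assert (e * ln k = - Gf g a l d k t0) by (unfold e; field; lra).
  lra.
Qed.


Lemma lim_eps (a l : R) (f : R -> R) :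
  filterlim f (at_right a) (locally l) ->
  forall e, 0 < e -> exists eta, 0 < eta /\ forall y, a < y < a + eta -> Rabs (f y - l) < e.
Proof.
  intros H e He.
  destruct (proj1 (filterlim_locally f l) H (mkposreal e He)) as [del Hdel].
  exists del. split; [apply cond_pos|]. intros y Hy.
  assert (Hb : ball a del y).
  { change (Rabs (y - a) < del). rewrite Rabs_pos_eq; lra. }
  specialize (Hdel y Hb ltac:(lra)). exact Hdel.
Qed.

Theorem corollary1 (a b : R) (g : R -> R)
  (Hab : a < b)
  (Hcont_a : filterlim g (at_right a) (locally (g a)))
  (Hcont : forall x, a < x < b -> continuous g x)
  (Hderiv : forall x, a < x < b -> ex_derive g x)
  (Hright : exists l : R,
      filterlim (fun x => (g x - g a) / (x - a)) (at_right a) (locally l)) :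
  limsup_right_ge (fun x => (xi g a x - a) / (x - a)) a b (/ exp 1).
Proof.
  intros eps delta Heps Hdelta.
  apply NNPP; intro Hno.
  assert (Hr : forall x, a < x < b -> x < a + delta -> (xi g a x - a) / (x - a) <= / exp 1 - eps).
  { intros x Hx Hxd. apply Rnot_lt_le. intro Hl. apply Hno. exists x. auto. }
  destruct Hright as [l Hl].
  assert (Hlim := lim_eps a l _ Hl).
  assert (He1 : 0 < / exp 1) by (apply Rinv_0_lt_compat; apply exp_pos).
  set (e' := Rmin eps (/ (2 * exp 1))).
  assert (He'1 : e' <= eps) by apply Rmin_l.
  assert (He'2 : e' <= / (2 * exp 1)) by apply Rmin_r.
  assert (Hh : / (2 * exp 1) = / exp 1 / 2) by (field; apply Rgt_not_eq, exp_pos).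
  assert (He'3 : 0 < e') by (apply Rmin_glb_lt; lra).
  set (c := / exp 1 - e').
  assert (Hc : 0 < c) by (unfold c; lra).
  assert (Hce : c < / exp 1) by (unfold c; lra).
  set (d := Rmin (b - a) delta).
  assert (Hd1 : d <= b - a) by apply Rmin_l.
  assert (Hd2 : d <= delta) by apply Rmin_r.
  assert (Hd : 0 < d) by (apply Rmin_glb_lt; lra).
  assert (NotS : forall x t, a < x < a + d -> a < t <= x -> a + c * (x - a) < t ->
            Derive g t <> phi g a x).
  { intros x t Hx Ht Hct E.
    set (P := fun tau => a < tau <= x /\ Derive g tau * (x - a) = g x - g a).
    assert (Hle : t <= xi g a x).
    { unfold xi. apply (lub_ge P x).
      - intros s [Hs _]; lra.
      - split; [lra|]. rewrite E. unfold phi. field. lra. }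
    specialize (Hr x ltac:(lra) ltac:(lra)).
    assert (xi g a x - a <= c * (x - a)).
    { replace (xi g a x - a) with ((xi g a x - a) / (x - a) * (x - a)) by (field; lra).
      apply Rmult_le_compat_r; unfold c; lra. }
    lra. }
  assert (Hgd : forall y, a < y < a + d -> derivable_pt_lim g y (Derive g y)).
  { intros y Hy. apply is_derive_Reals. apply Derive_correct. apply Hderiv; lra. }
  set (dphi := fun y => (Derive g y - phi g a y)/(y - a)).
  assert (Hphid : forall y, a < y < a + d -> derivable_pt_lim (phi g a) y (dphi y)).
  { intros y Hy. apply is_derive_Reals. apply phi_der; [lra|]. apply Hderiv; lra. }
  assert (Hc1 : c < 1).
  { assert (1 < exp 1) by (pose proof (exp_increasing 0 1 ltac:(lra)) as E; rewrite exp_0 in E; exact E).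
    assert (/ exp 1 < / 1) by (apply Rinv_lt_contravar; lra). rewrite Rinv_1 in H0. lra. }
  assert (Hne : forall y, a < y < a + d -> dphi y <> 0).
  { intros y Hy E. unfold dphi in E.
    assert (Derive g y = phi g a y).
    { assert (Derive g y - phi g a y = 0); [|lra].
      replace (Derive g y - phi g a y) with ((Derive g y - phi g a y) / (y - a) * (y - a))
        by (field; lra). rewrite E. ring. }
    apply (NotS y y); try lra.
    assert (c * (y - a) < 1 * (y - a)) by (apply Rmult_lt_compat_r; lra). lra. }
  set (x0 := a + d / 2).
  destruct (Rtotal_order (dphi x0) 0) as [Hneg|[Hz|Hpos]].
  2:{ exact (Hne x0 ltac:(unfold x0; lra) Hz). }
  -
    assert (Hall : forall x, a < x < a + d -> dphi x < 0).
    { intros x Hx. destruct (Rle_or_lt x x0) as [H|H].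
      - apply (sign_const' (phi g a) dphi x x0 0); auto.
        + intros y Hy; apply Hphid; unfold x0 in *; lra.
        + intros y Hy; apply Hne; unfold x0 in *; lra.
      - destruct (Rtotal_order (dphi x) 0) as [H1|[H1|H1]]; auto.
        + exfalso; apply (Hne x); auto.
        + exfalso. assert (0 < dphi x0); [|lra].
          apply (sign_const (phi g a) dphi x0 x 0); try lra; auto.
          * intros y Hy; apply Hphid; unfold x0 in *; lra.
          * intros y Hy; apply Hne; unfold x0 in *; lra. }
    apply (main a d (- l) c (fun y => - g y)); auto.
    + intros y Hy. exists (- Derive g y). apply (is_derive_opp g). apply Derive_correct, Hderiv; lra.
    + intros e He. destruct (Hlim e He) as [eta [Heta Hy]]. exists eta. split; auto.
      intros y Hy'. specialize (Hy y Hy').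
      replace (phi (fun y => - g y) a y - - l) with (- (phi g a y - l))
        by (unfold phi; field; lra). rewrite Rabs_Ropp. exact Hy.
    + intros x t Hx Ht Hct. rewrite Derive_opp.
      replace (phi (fun y => - g y) a x) with (- phi g a x) by (unfold phi; field; lra).
      assert (Derive g t < phi g a x); [|lra].
      assert (Hxx : Derive g x < phi g a x).
      { specialize (Hall x Hx). unfold dphi in Hall.
        assert ((Derive g x - phi g a x) / (x - a) * (x - a) < 0 * (x - a))
          by (apply Rmult_lt_compat_r; lra).
        replace ((Derive g x - phi g a x) / (x - a) * (x - a)) with (Derive g x - phi g a x)
          in H by (field; lra). lra. }
      apply (sign_const' g (Derive g) t x (phi g a x)); [lra| | |auto].
      * intros y Hy; apply Hgd; lra.
      * intros y Hy; apply NotS; lra.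
  -
    assert (Hall : forall x, a < x < a + d -> 0 < dphi x).
    { intros x Hx. destruct (Rle_or_lt x x0) as [H|H].
      - apply (sign_const (phi g a) dphi x x0 0); auto.
        + intros y Hy; apply Hphid; unfold x0 in *; lra.
        + intros y Hy; apply Hne; unfold x0 in *; lra.
      - destruct (Rtotal_order (dphi x) 0) as [H1|[H1|H1]]; auto.
        + exfalso. assert (dphi x0 < 0); [|lra].
          apply (sign_const' (phi g a) dphi x0 x 0); try lra; auto.
          * intros y Hy; apply Hphid; unfold x0 in *; lra.
          * intros y Hy; apply Hne; unfold x0 in *; lra.
        + exfalso; apply (Hne x); auto. }
    apply (main a d l c g); auto.
    + intros y Hy. apply Hderiv; lra.
    + intros x t Hx Ht Hct.
      assert (Hxx : phi g a x < Derive g x).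
      { specialize (Hall x Hx). unfold dphi in Hall.
        assert (0 * (x - a) < (Derive g x - phi g a x) / (x - a) * (x - a))
          by (apply Rmult_lt_compat_r; lra).
        replace ((Derive g x - phi g a x) / (x - a) * (x - a)) with (Derive g x - phi g a x)
          in H by (field; lra). lra. }
      apply (sign_const g (Derive g) t x (phi g a x)); [lra| | |auto].
      * intros y Hy; apply Hgd; lra.
      * intros y Hy; apply NotS; lra.
Qed.
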